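(* Let $p, q \in \mathbb{R}$ with $q \le p$. Then $$\mathscr{E}_p(v) - \mathscr{E}_q(v) \le \frac{p-q}{8} (\max v - \min v)^2$$ for every $n \in \mathbb{N}$ and every $v \in \mathbb{R}^n$. Moreover, the constant $\frac{p-q}{8}$ is sharp: if $C \in \mathbb{R}$ is such that $\mathscr{E}_p(v) - \mathscr{E}_q(v) \le C(\max v - \min v)^2$ for all $n\in\mathbb{N}$ and all $v \in \mathbb{R}^n$, then $C \ge \frac{p-q}{8}$.
   Context: For $v = (v_1,\dots,v_n) \in \mathbb{R}^n$, the exponential mean of order $p \in \mathbb{R}$ is $\mathscr{E}_p(v) = \frac{1}{p}\ln\big(\frac{e^{p v_1} + \cdots + e^{p v_n}}{n}\big)$ for $p \neq 0$ and $\mathscr{E}_0(v) = \frac{v_1 + \cdots + v_n}{n}$. Here $\max v$ and $\min v$ denote the largest and smallest entry of $v$. *)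

(* Defs.v *)
(* concrete reals R. A vector v in R^n is a function
   v : nat -> R of which only the entries v 0, ..., v (n-1) are used. *)
From Stdlib Require Import Reals.
Open Scope R_scope.

Fixpoint sumn (n : nat) (f : nat -> R) : R :=
  match n with O => 0 | S k => sumn k f + f k end.

(* max and min of the entries v 0 .. v (n-1); meaningful for n >= 1 *)
Fixpoint vmax (n : nat) (v : nat -> R) : R :=
  match n with O => 0 | S O => v O | S k => Rmax (vmax k v) (v k) end.
Fixpoint vmin (n : nat) (v : nat -> R) : R :=
  match n with O => 0 | S O => v O | S k => Rmin (vmin k v) (v k) end.

Definition expmean (p : R) (n : nat) (v : nat -> R) : R :=
  if Req_EM_T p 0 then sumn n v / INR n
  else / p * ln (sumn n (fun i => exp (p * v i)) / INR n).

(* Main.v *)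
Require Import Defs.
From Stdlib Require Import Reals Lra Psatz.
From Coquelicot Require Import Coquelicot.
Open Scope R_scope.

Lemma div_le (x y z : R) : 0 < y -> x <= z * y -> x / y <= z.
Proof. intros Hy H. apply Rmult_le_reg_r with y; auto. unfold Rdiv.
  rewrite Rmult_assoc, Rinv_l by lra. lra. Qed.
Lemma div_ge (x y z : R) : 0 < y -> z * y <= x -> z <= x / y.
Proof. intros Hy H. apply Rmult_le_reg_r with y; auto. unfold Rdiv.
  rewrite Rmult_assoc, Rinv_l by lra. lra. Qed.

Lemma sumn_ext n f g : (forall i, f i = g i) -> sumn n f = sumn n g.
Proof. intros H; induction n; simpl; [reflexivity| rewrite IHn, H; reflexivity]. Qed.
Lemma sumn_lin n a b c f g h :
  sumn n (fun i => a * f i + b * g i + c * h i) = a * sumn n f + b * sumn n g + c * sumn n h.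
Proof. induction n; simpl; [ring| rewrite IHn; ring]. Qed.
Lemma sumn_nonneg n f : (forall i, (i < n)%nat -> 0 <= f i) -> 0 <= sumn n f.
Proof. induction n; simpl; intros H; [lra|].
  assert (0 <= sumn n f) by (apply IHn; intros; apply H; lia).
  assert (0 <= f n) by (apply H; lia). lra. Qed.
Lemma sumn_pos n f : (forall i, 0 < f i) -> (1 <= n)%nat -> 0 < sumn n f.
Proof. intros H; induction n; simpl; intros Hn; [lia|].
  destruct n. simpl. specialize (H 0%nat); lra.
  assert (0 < sumn (S n) f) by (apply IHn; lia). specialize (H (S n)); lra. Qed.
Lemma sumn_one n : sumn n (fun _ => 1) = INR n.
Proof. induction n; simpl sumn; [simpl; ring| rewrite IHn, S_INR; ring]. Qed.

Lemma vbounds n v i : (1 <= n)%nat -> (i < n)%nat -> vmin n v <= v i <= vmax n v.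
Proof. revert i. induction n; intros i Hn Hi; [lia|].
  destruct n. assert (i = 0%nat) by lia; subst; simpl; lra.
  change (vmin (S (S n)) v) with (Rmin (vmin (S n) v) (v (S n))).
  change (vmax (S (S n)) v) with (Rmax (vmax (S n) v) (v (S n))).
  destruct (Nat.eq_dec i (S n)).
  - subst. split; [apply Rmin_r | apply Rmax_r].
  - assert (vmin (S n) v <= v i <= vmax (S n) v) by (apply IHn; lia).
    pose proof (Rmin_l (vmin (S n) v) (v (S n))). pose proof (Rmax_l (vmax (S n) v) (v (S n))).
    lra. Qed.

Definition T n v t := sumn n (fun i => exp (t * v i)).
Definition T1 n v t := sumn n (fun i => v i * exp (t * v i)).
Definition T2 n v t := sumn n (fun i => v i ^ 2 * exp (t * v i)).
Definition Kpp n v t := (T2 n v t * T n v t - T1 n v t ^ 2) / T n v t ^ 2.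

Lemma d_sum n (f : nat -> R -> R) f' t : (forall i, is_derive (f i) t (f' i)) ->
  is_derive (fun s => sumn n (fun i => f i s)) t (sumn n f').
Proof. intros H. induction n as [|k IH]; simpl.
- apply is_derive_Reals, derivable_pt_lim_const.
- exact (is_derive_plus _ _ _ _ _ IH (H k)).
Qed.

Lemma dT n v t : is_derive (T n v) t (T1 n v t).
Proof. unfold T, T1. apply (d_sum n (fun i s => exp (s * v i))).
  intros i. auto_derive; [auto| ring]. Qed.
Lemma dT1 n v t : is_derive (T1 n v) t (T2 n v t).
Proof. unfold T1, T2. apply (d_sum n (fun i s => v i * exp (s * v i))).
  intros i. auto_derive; [auto| ring]. Qed.

Lemma Tpos n v t : (1 <= n)%nat -> 0 < T n v t.
Proof. intros; unfold T; apply sumn_pos; auto. intros; apply exp_pos. Qed.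

Lemma dlog (F F1 : R -> R) t b c: is_derive F t (F1 t) -> 0 < F t -> 0 < c ->
  is_derive (fun s => ln (F s / c) - b * s^2) t (F1 t / F t - 2 * b * t).
Proof. intros H Hp Hc. auto_derive.
- split; [exists (F1 t); exact H|split; [|exact I]]. apply Rmult_lt_0_compat; auto. apply Rinv_0_lt_compat; auto.
- replace (Derive (fun x => F x) t) with (F1 t). field. split; lra.
  symmetry; apply is_derive_unique; exact H.
Qed.

Lemma dquot (F F1 F2 : R -> R) t b: is_derive F t (F1 t) -> is_derive F1 t (F2 t) -> 0 < F t ->
  is_derive (fun s => F1 s / F s - 2 * b * s) t ((F2 t * F t - F1 t ^ 2) / F t ^ 2 - 2 * b).
Proof. intros H H1 Hp. auto_derive.
- split; [exists (F2 t); exact H1|split; [exists (F1 t); exact H|split; [lra|exact I]]].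
- replace (Derive (fun x => F x) t) with (F1 t) by (symmetry; apply is_derive_unique; exact H).
  replace (Derive (fun x => F1 x) t) with (F2 t) by (symmetry; apply is_derive_unique; exact H1).
  field. lra.
Qed.
Definition Hf (G G1 : R -> R) t := if Req_EM_T t 0 then G1 0 else G t / t.

Section Chord.
Variables (G G1 G2 : R -> R) (a c : R).
Hypotheses (Ha : a < 0) (Hc : 0 < c) (G0 : G 0 = 0)
  (dG : forall t, a <= t <= c -> derivable_pt_lim G t (G1 t))
  (dG1 : forall t, a <= t <= c -> derivable_pt_lim G1 t (G2 t))
  (G2n : forall t, a <= t <= c -> G2 t <= 0).

Lemma mono x y : a <= x -> x <= y -> y <= c -> G1 y <= G1 x.
Proof. intros. destruct (Req_dec x y) as [->|Hne]; [lra|].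
  destruct (MVT_cor2 G1 G2 x y) as [z [Hz1 Hz2]]; [lra| intros; apply dG1; lra |].
  assert (G2 z <= 0) by (apply G2n; lra). nra. Qed.

Lemma mvt x y : a <= x -> x < y -> y <= c -> exists z, x < z < y /\ G y - G x = G1 z * (y - x).
Proof. intros. destruct (MVT_cor2 G G1 x y) as [z [Hz1 Hz2]]; [lra| intros; apply dG; lra |].
  exists z; split; auto. Qed.

Lemma chord q p : a <= q -> q <= p -> p <= c -> Hf G G1 p <= Hf G G1 q.
Proof. intros Hq Hqp Hp. unfold Hf.
  destruct (Rtotal_order q 0) as [q0|[q0|q0]]; destruct (Rtotal_order p 0) as [p0|[p0|p0]];
  try lra.
  -            
    destruct (Req_EM_T p 0); [lra|]. destruct (Req_EM_T q 0); [lra|].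
    destruct (Req_dec q p) as [->|Hne]; [lra|].
    destruct (mvt p 0) as [c1 [Hc1 E1]]; try lra.
    destruct (mvt q p) as [c2 [Hc2 E2]]; try lra.
    assert (G1 c1 <= G1 c2) by (apply mono; lra).
    assert (Gp : G p / p = G1 c1) by (field_simplify_eq; [lra| lra]).
    rewrite Gp. apply Rge_le. 
    assert (Eq : G q = (G q / q) * q) by (field; lra).
    set (r := G q / q) in *. nra.
  - subst p. destruct (Req_EM_T 0 0); [|lra]. destruct (Req_EM_T q 0); [lra|].
    destruct (mvt q 0) as [c1 [Hc1 E1]]; try lra.
    assert (G1 0 <= G1 c1) by (apply mono; lra).
    assert (Gq : G q / q = G1 c1) by (field_simplify_eq; [lra| lra]). lra.
  - destruct (Req_EM_T p 0); [lra|]. destruct (Req_EM_T q 0); [lra|].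
    destruct (mvt q 0) as [c1 [Hc1 E1]]; try lra.
    destruct (mvt 0 p) as [c2 [Hc2 E2]]; try lra.
    assert (G1 0 <= G1 c1) by (apply mono; lra).
    assert (G1 c2 <= G1 0) by (apply mono; lra).
    assert (Gq : G q / q = G1 c1) by (field_simplify_eq; [lra| lra]).
    assert (Gp : G p / p = G1 c2) by (field_simplify_eq; [lra| lra]). lra.
  - subst. lra.
  - subst q. destruct (Req_EM_T 0 0); [|lra]. destruct (Req_EM_T p 0); [lra|].
    destruct (mvt 0 p) as [c2 [Hc2 E2]]; try lra.
    assert (G1 c2 <= G1 0) by (apply mono; lra).
    assert (Gp : G p / p = G1 c2) by (field_simplify_eq; [lra| lra]). lra.
  - destruct (Req_EM_T p 0); [lra|]. destruct (Req_EM_T q 0); [lra|].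
    destruct (Req_dec q p) as [->|Hne]; [lra|].
    destruct (mvt 0 q) as [c1 [Hc1 E1]]; try lra.
    destruct (mvt q p) as [c2 [Hc2 E2]]; try lra.
    assert (G1 c2 <= G1 c1) by (apply mono; lra).
    assert (Gq : G q / q = G1 c1) by (field_simplify_eq; [lra| lra]).
    rewrite Gq.
    assert (Eq : G p = (G p / p) * p) by (field; lra).
    set (r := G p / p) in *. nra.
Qed.
End Chord.
Lemma T0 n v : T n v 0 = INR n.
Proof. unfold T. rewrite <- sumn_one. apply sumn_ext. intros; rewrite Rmult_0_l, exp_0; reflexivity. Qed.
Lemma T10 n v : T1 n v 0 = sumn n v.
Proof. unfold T1. apply sumn_ext. intros; rewrite Rmult_0_l, exp_0; ring. Qed.

Definition GG n v b t := ln (T n v t / INR n) - b * t ^ 2.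
Definition GG1 n v b t := T1 n v t / T n v t - 2 * b * t.

Lemma Hf_eq n v b t : (1 <= n)%nat -> Hf (GG n v b) (GG1 n v b) t = expmean t n v - b * t.
Proof. intros Hn. assert (0 < INR n) by (apply lt_0_INR; lia).
  unfold Hf, expmean, GG, GG1. destruct (Req_EM_T t 0).
  - subst. rewrite T0, T10. field. lra.
  - unfold T. field. auto.
Qed.

Lemma GG0 n v b : (1 <= n)%nat -> GG n v b 0 = 0.
Proof. intros Hn. assert (0 < INR n) by (apply lt_0_INR; lia).
  unfold GG. rewrite T0. unfold Rdiv; rewrite Rinv_r by lra. rewrite ln_1. ring. Qed.

Lemma dGG n v b t : (1 <= n)%nat -> derivable_pt_lim (GG n v b) t (GG1 n v b t).
Proof. intros Hn. apply is_derive_Reals. unfold GG, GG1.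
  apply (dlog (T n v) (T1 n v)). apply dT. apply Tpos; auto. apply lt_0_INR; lia. Qed.
Lemma dGG1 n v b t : (1 <= n)%nat -> derivable_pt_lim (GG1 n v b) t (Kpp n v t - 2 * b).
Proof. intros Hn. apply is_derive_Reals. unfold GG1, Kpp.
  apply (dquot (T n v) (T1 n v) (T2 n v)). apply dT. apply dT1. apply Tpos; auto. Qed.

Lemma key1 n v b a c q p : (1 <= n)%nat -> a < 0 -> 0 < c ->
  (forall t, a <= t <= c -> Kpp n v t <= 2 * b) -> a <= q -> q <= p -> p <= c ->
  expmean p n v - b * p <= expmean q n v - b * q.
Proof. intros Hn Ha Hc HK Hq Hqp Hp. rewrite <- !(Hf_eq n v b) by auto.
  apply (chord (GG n v b) (GG1 n v b) (fun t => Kpp n v t - 2 * b) a c); auto.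
  - apply GG0; auto.
  - intros; apply dGG; auto.
  - intros; apply dGG1; auto.
  - intros t Ht. specialize (HK t Ht). lra.
Qed.

Lemma Hf_opp G G1 t : Hf (fun s => - G s) (fun s => - G1 s) t = - Hf G G1 t.
Proof. unfold Hf. destruct (Req_EM_T t 0); [reflexivity| field; auto]. Qed.

Lemma key2 n v b a c q p : (1 <= n)%nat -> a < 0 -> 0 < c ->
  (forall t, a <= t <= c -> 2 * b <= Kpp n v t) -> a <= q -> q <= p -> p <= c ->
  expmean q n v - b * q <= expmean p n v - b * p.
Proof. intros Hn Ha Hc HK Hq Hqp Hp. rewrite <- !(Hf_eq n v b) by auto.
  cut (Hf (fun s => - GG n v b s) (fun s => - GG1 n v b s) p <=
       Hf (fun s => - GG n v b s) (fun s => - GG1 n v b s) q).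
  { rewrite !Hf_opp. lra. }
  apply (chord _ _ (fun t => - (Kpp n v t - 2 * b)) a c); auto.
  - rewrite GG0; auto; ring.
  - intros. apply is_derive_Reals. apply (is_derive_opp (GG n v b)). apply is_derive_Reals, dGG; auto.
  - intros. apply is_derive_Reals. apply (is_derive_opp (GG1 n v b)). apply is_derive_Reals, dGG1; auto.
  - intros t Ht. specialize (HK t Ht). lra.
Qed.

Lemma Kpp_le n v t m M : (1 <= n)%nat -> (forall i, (i < n)%nat -> m <= v i <= M) ->
  Kpp n v t <= (M - m) ^ 2 / 4.
Proof. intros Hn Hb. pose proof (Tpos n v t Hn) as HW.
  assert (Hs : 0 <= (M + m) * T1 n v t + (-1) * T2 n v t + (- (m * M)) * T n v t).
  { unfold T, T1, T2. rewrite <- sumn_lin. apply sumn_nonneg. intros i Hi.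
    specialize (Hb i Hi). pose proof (exp_pos (t * v i)).
    assert (0 <= (v i - m) * (M - v i)) by nra. nra. }
  unfold Kpp. apply div_le. nra.
  set (W := T n v t) in *. set (A := T1 n v t) in *. set (S2 := T2 n v t) in *.
  assert (S2 * W <= ((M + m) * A - m * M * W) * W) by nra.
  pose proof (pow2_ge_0 ((M + m) * W / 2 - A)). nra.
Qed.

Theorem part1 (p q : R) (hqp : q <= p) n v : (1 <= n)%nat ->
  expmean p n v - expmean q n v <= (p - q) / 8 * (vmax n v - vmin n v) ^ 2.
Proof. intros Hn. set (M := vmax n v). set (m := vmin n v).
  set (b := (M - m) ^ 2 / 8).
  assert (H := key1 n v b (- (Rabs p + Rabs q + 1)) (Rabs p + Rabs q + 1) q p Hn).
  pose proof (Rabs_pos p). pose proof (Rabs_pos q).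
  pose proof (Rle_abs p). pose proof (Rle_abs q).
  assert (-(Rabs q) <= q) by (pose proof (Rle_abs (-q)); rewrite Rabs_Ropp in *; lra).
  assert (p <= Rabs p) by apply Rle_abs.
  assert (Hk : expmean p n v - b * p <= expmean q n v - b * q).
  { apply H; try lra. intros t _. unfold b. replace (2 * ((M - m) ^ 2 / 8)) with ((M - m)^2/4) by field.
    apply Kpp_le; auto. intros i Hi. apply vbounds; auto. }
  unfold b in Hk. lra.
Qed.

Definition w (x : R) : nat -> R := fun i => if Nat.eqb i 0 then - x else x.

Lemma Kpp_w_ge x t R : 0 < x -> Rabs t <= R -> R * x < 1 ->
  x ^ 2 * (1 - (R * x) ^ 2) ^ 2 <= Kpp 2 (w x) t.
Proof. intros Hx Ht HR.
  assert (Hk : Kpp 2 (w x) t = 4 * x ^ 2 * (exp (- (t * x)) * exp (t * x)) / (exp (- (t * x)) + exp (t * x)) ^ 2).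
  { unfold Kpp, T, T1, T2, w; simpl. replace (t * - x) with (- (t * x)) by ring.
    pose proof (exp_pos (- (t * x))). pose proof (exp_pos (t * x)). field. lra. }
  rewrite Hk.
  set (y := t * x).
  set (A := exp (- y)). set (B := exp y).
  assert (AB : A * B = 1) by (unfold A, B; rewrite <- exp_plus; replace (-y + y) with 0 by ring; apply exp_0).
  assert (HA : 1 - y <= A) by (unfold A; pose proof (exp_ineq1_le (- y)); lra).
  assert (HB : 1 + y <= B) by (unfold B; pose proof (exp_ineq1_le y); lra).
  assert (Apos : 0 < A) by apply exp_pos. assert (Bpos : 0 < B) by apply exp_pos.
  assert (Hty : t <= Rabs t /\ - t <= Rabs t) by (split; [apply Rle_abs| rewrite <- Rabs_Ropp; apply Rle_abs]).
  assert (Ht2 : t ^ 2 <= R ^ 2).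
  { assert (0 <= (R - t) * (R + t)) by (apply Rmult_le_pos; lra). nra. }
  assert (Hy2 : y ^ 2 <= (R * x) ^ 2).
  { unfold y. replace ((t * x) ^ 2) with (t ^ 2 * x ^ 2) by ring.
    replace ((R * x) ^ 2) with (R ^ 2 * x ^ 2) by ring.
    apply Rmult_le_compat_r; [nra| exact Ht2]. }
  assert (Hy1 : y < 1 /\ -1 < y) by (unfold y; nra).
  assert (H1 : A * (1 + y) <= 1) by nra.
  assert (H2 : B * (1 - y) <= 1) by nra.
  assert (HT : (A + B) * (1 - y ^ 2) <= 2) by nra.
  assert (HRx0 : 0 <= R * x) by (apply Rmult_le_pos; [pose proof (Rabs_pos t); lra| lra]).
  assert (Hs : 0 <= 1 - (R * x) ^ 2) by nra.
  assert (HT2 : (A + B) * (1 - (R * x) ^ 2) <= 2) by nra.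
  assert (HT3 : ((A + B) * (1 - (R * x) ^ 2)) ^ 2 <= 4).
  { assert (0 <= (A + B) * (1 - (R * x) ^ 2)) by nra. nra. }
  rewrite AB. apply div_ge. nra.
  replace (x ^ 2 * (1 - (R * x) ^ 2) ^ 2 * (A + B) ^ 2) with
    (x ^ 2 * ((A + B) * (1 - (R * x) ^ 2)) ^ 2) by ring.
  nra.
Qed.

Theorem part2 (p q : R) (hqp : q <= p) (C : R) :
  (forall (n : nat) (v : nat -> R), (1 <= n)%nat ->
        expmean p n v - expmean q n v <= C * (vmax n v - vmin n v) ^ 2) ->
  C >= (p - q) / 8.
Proof. intros HC. apply Rnot_lt_ge. intros HCl.
  set (d := (p - q) / 8 - C). assert (Hd : 0 < d) by (unfold d; lra).
  set (e := d / (d + (p - q) + 1)).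
  assert (He : e * (d + (p - q) + 1) = d) by (unfold e; field; lra).
  assert (He0 : 0 < e) by (unfold e; apply Rdiv_lt_0_compat; lra).
  assert (He1 : e < 1) by nra.
  assert (Hed : e * (p - q) < d) by nra.
  set (R := Rabs p + Rabs q + 1).
  pose proof (Rabs_pos p). pose proof (Rabs_pos q).
  assert (HR : 1 <= R) by (unfold R; lra).
  set (x := e / R).
  assert (Hx : 0 < x) by (unfold x; apply Rdiv_lt_0_compat; lra).
  assert (HRx : R * x = e) by (unfold x; field; lra).
  set (b := x ^ 2 * (1 - (R * x) ^ 2) ^ 2 / 2).
  assert (Hk : expmean q 2 (w x) - b * q <= expmean p 2 (w x) - b * p).
  { apply (key2 2 (w x) b (- R) R); try lia; try lra.
    - intros t Ht. unfold b. replace (2 * (x ^ 2 * (1 - (R * x) ^ 2) ^ 2 / 2)) with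
        (x ^ 2 * (1 - (R * x) ^ 2) ^ 2) by field.
      apply Kpp_w_ge; try lra. apply Rabs_le; lra.
    - assert (-(Rabs q) <= q) by (pose proof (Rle_abs (-q)); rewrite Rabs_Ropp in *; lra).
      unfold R; lra.
    - pose proof (Rle_abs p). unfold R; lra. }
  specialize (HC 2%nat (w x) ltac:(lia)).
  assert (Hv : vmax 2 (w x) - vmin 2 (w x) = 2 * x).
  { unfold w; simpl. rewrite Rmax_right by lra. rewrite Rmin_left by lra. ring. }
  rewrite Hv in HC.
  assert (H1 : b * (p - q) <= C * (2 * x) ^ 2) by lra.
  unfold b in H1. rewrite HRx in H1.
  assert (H2 : (1 - e ^ 2) ^ 2 * (p - q) / 8 <= C).
  { apply Rmult_le_reg_r with (x ^ 2). nra. nra. }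
  assert (Hpq : 0 <= p - q) by lra.
  assert (0 <= (p - q) * e ^ 4) by (apply Rmult_le_pos; [lra| apply pow_le; lra]).
  assert (0 <= (p - q) * e * (1 - e)) by (apply Rmult_le_pos; [apply Rmult_le_pos|]; lra).
  unfold d in Hed. nra.
Qed.

Theorem mainTheorem5 (p q : R) (hqp : q <= p) :
  (forall (n : nat) (v : nat -> R), (1 <= n)%nat ->
     expmean p n v - expmean q n v <= (p - q) / 8 * (vmax n v - vmin n v) ^ 2)
  /\
  (forall C : R,
     (forall (n : nat) (v : nat -> R), (1 <= n)%nat ->
        expmean p n v - expmean q n v <= C * (vmax n v - vmin n v) ^ 2) ->
     C >= (p - q) / 8).
Proof. split.
  - intros n v Hn. apply part1; auto.
  - intros C HC. apply (part2 p q hqp C HC).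
Qed.
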